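(* Let $0<q<1$, let $m,n$ be positive integers, let $s_1,\dots,s_m>0$ be real and let $b_1,\dots,b_m$ be complex numbers with $|b_k|>1$ for all $k$. Put $s=s_1+\cdots+s_m$. Then \[ n^m\,\lambda_{q^n}\begin{bmatrix}s_1,\dots,s_m\\ b_1^n,\dots,b_m^n\end{bmatrix} = [n]_q^{\,s}\sum_{\varepsilon_1^n=\cdots=\varepsilon_m^n=1} \lambda_q\begin{bmatrix}s_1,\dots,s_m\\ \varepsilon_1b_1,\dots,\varepsilon_mb_m\end{bmatrix}, \] where the sum is over all $n^m$ tuples $(\varepsilon_1,\dots,\varepsilon_m)$ of complex $n$-th roots of unity.
   Context: For $0<p<1$ and real $x$ let $[x]_p := (1-p^x)/(1-p)$. For real $s_1,\dots,s_m>0$ and complex $b_1,\dots,b_m$ with $|b_k|>1$, the multiple $p$-polylogarithm is \[ \lambda_p\begin{bmatrix}s_1,\dots,s_m\\ b_1,\dots,b_m\end{bmatrix} := \sum_{\nu_1,\dots,\nu_m\ge1}\prod_{k=1}^m b_k^{-\nu_k}\Big[\sum_{j=k}^m\nu_j\Big]_p^{-s_k}, \] the sum being over positive integers $\nu_1,\dots,\nu_m$. In the claim it is used with $p=q$ and with $p=q^n$. *)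

(* Defs.v *)
From HB Require Import structures.
From mathcomp Require Import all_boot all_order all_algebra.
From mathcomp Require Import all_classical all_reals all_analysis.
From mathcomp Require Import complex.
Set Implicit Arguments. Unset Strict Implicit. Unset Printing Implicit Defensive.
Import Order.TTheory GRing.Theory Num.Theory.
Import numFieldNormedType.Exports.
Local Open Scope ring_scope.
Local Open Scope complex_scope.

Definition qbracket {R : realType} (p x : R) : R := (1 - p `^ x) / (1 - p).

Definition lam_term {R : realType} (m : nat) (p : R) (s : 'I_m -> R)
    (b : 'I_m -> R[i]) (nu : 'I_m -> nat) : R[i] :=
  \prod_(k < m)
     ((b k) ^- (nu k) *
      ((qbracket p (\sum_(j < m | (k <= j)%N) nu j)%:R) `^ (- s k))%:C).

Definition lam_box {R : realType} (m : nat) (p : R) (s : 'I_m -> R)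
    (b : 'I_m -> R[i]) (N : nat) : R[i] :=
  \sum_(nu : {ffun 'I_m -> 'I_N}) lam_term p s b (fun k => (nu k).+1).

(* The multiple p-polylogarithm lambda_p[s; b] (an absolutely convergent
   multiple series), defined as the limit of its box partial sums, taken
   componentwise (real and imaginary parts). *)
Definition mpolylog {R : realType} (m : nat) (p : R) (s : 'I_m -> R)
    (b : 'I_m -> R[i]) : R[i] :=
  (limn (fun N => complex.Re (lam_box p s b N)))
    +i* (limn (fun N => complex.Im (lam_box p s b N))).

(* Main.v *)
Require Import Defs.
From HB Require Import structures.
From mathcomp Require Import all_boot all_order all_algebra.
From mathcomp Require Import all_classical all_reals all_analysis.
From mathcomp Require Import complex.
From mathcomp Require Import cyclic separable cyclotomic.
From mathcomp Require Import lra zify.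
Import Order.TTheory GRing.Theory Num.Theory.
Import numFieldNormedType.Exports.
Local Open Scope ring_scope.
Local Open Scope complex_scope.

Lemma prim_exists (R : realType) (n : nat) : (0 < n)%N -> {w : R[i] | n.-primitive_root w}.
Proof.
pose p : {poly R[i]} := 'X^n - 1; have [r Dp] := closed_field_poly_normal p.
move=> n_gt0; apply/sigW; rewrite (monicP _) ?monicXnsubC // scale1r in Dp.
have rn1: all n.-unity_root r by apply/allP=> z; rewrite -root_prod_XsubC -Dp.
have sz_r: (n < (size r).+1)%N.
  by rewrite -(size_prod_XsubC r id) -Dp size_XnsubC.
have [|z] := hasP (has_prim_root n_gt0 rn1 _ sz_r); last by exists z.
by rewrite -separable_prod_XsubC -Dp separable_Xn_sub_1 // pnatr_eq0 -lt0n.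
Qed.

Lemma roots_sum (R : realType) (n : nat) (rs : seq R[i]) : (0 < n)%N -> uniq rs ->
  (forall z : R[i], (z \in rs) = (z ^+ n == 1)) ->
  size rs = n /\ forall v : nat,
   \sum_(i < size rs) (nth 0 rs i) ^- v = if (n %| v)%N then n%:R else 0.
Proof.
move=> n0 urs Hrs; have [w wP] := @prim_exists R n n0.
have Hp : perm_eq rs [seq w ^+ i | i <- iota 0 n].
  apply: uniq_perm => //.
    rewrite map_inj_in_uniq ?iota_uniq // => i j; rewrite !mem_iota /= !add0n => hi hj.
    move/eqP; rewrite (eq_prim_root_expr wP) !modn_small // => /eqP //.
  move=> z; rewrite Hrs; apply/idP/idP.
    move/eqP=> zn; have [i ->] := prim_rootP wP zn.
    by apply/mapP; exists (val i); rewrite // mem_iota /= add0n ltn_ord.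
  case/mapP=> i _ ->; by rewrite -exprM mulnC exprM (prim_expr_order wP) expr1n.
have sz : size rs = n by rewrite (perm_size Hp) size_map size_iota.
split => // v.
rewrite -(big_mkord xpredT (fun i => (nth 0 rs i) ^- v)) -(big_nth 0 xpredT (fun z => z ^- v)).
rewrite (perm_big _ Hp) /= big_map.
have -> : \sum_(i <- iota 0 n) (w ^+ i) ^- v = \sum_(i < n) ((w ^+ v)^-1) ^+ i.
  rewrite -(big_mkord xpredT (fun i => ((w ^+ v)^-1) ^+ i)) /index_iota subn0.
  by apply: eq_bigr => i _; rewrite -exprM mulnC exprM exprVn.
case: ifP => hd.
  have -> : w ^+ v = 1 by apply/eqP; rewrite -(prim_order_dvd wP).
  by rewrite invr1 (eq_bigr (fun _ => 1)) ?sumr_const ?card_ord // => i _; rewrite expr1n.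
have hx : (w ^+ v)^-1 != 1.
  rewrite invr_eq1 -(prim_order_dvd wP) hd //.
have: ((w ^+ v)^-1 - 1) * \sum_(i < n) ((w ^+ v)^-1) ^+ i = 0.
  by rewrite -subrX1 exprVn -exprM mulnC exprM (prim_expr_order wP) expr1n invr1 subrr.
by move/eqP; rewrite mulf_eq0 subr_eq0 (negbTE hx) /= => /eqP.
Qed.

Definition rnorm {R : realType} (c : R[i]) : R := complex.Re `|c|.

Lemma rnormE {R : realType} (c : R[i]) : (rnorm c)%:C = `|c|.
Proof. by rewrite /rnorm RRe_real // normr_real. Qed.

Lemma rnorm_gt1 {R : realType} (c : R[i]) : 1 < `|c| -> 1 < rnorm c.
Proof. by rewrite -rnormE -ltcR. Qed.

Lemma qbr_nat {R : realType} (p : R) (T : nat) : 0 < p ->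
  qbracket p T%:R = (1 - p ^+ T) / (1 - p).
Proof. by move=> p0; rewrite /qbracket powR_mulrn // ltW. Qed.

Lemma qbr_ge1 {R : realType} (p : R) (T : nat) : 0 < p -> p < 1 -> (0 < T)%N ->
  1 <= qbracket p T%:R.
Proof.
move=> p0 p1 T0; rewrite qbr_nat // ler_pdivlMr ?subr_gt0 // mul1r lerD2l lerN2.
case: T T0 => // T _; rewrite exprS; apply: ler_piMr; first exact: ltW.
by apply: exprn_ile1; apply: ltW.
Qed.

Lemma powRN_le1 {R : realType} (x s : R) : 1 <= x -> 0 <= s -> x `^ (- s) <= 1.
Proof.
move=> x1 s0; rewrite powRN invf_le1 ?powR_gt0 ?(lt_le_trans ltr01) //.
have h := @ge0_ler_powR _ s s0 1 x; rewrite powR1 in h.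
by apply: h; rewrite // nnegrE ?(le_trans ler01).
Qed.

Lemma term_bound {R : realType} (m : nat) (p : R) (s : 'I_m -> R) (c : 'I_m -> R[i])
   (nu : 'I_m -> nat) : 0 < p -> p < 1 -> (forall k, 0 <= s k) ->
   (forall k, 1 < `|c k|) -> (forall k, (0 < nu k)%N) ->
   `|lam_term p s c nu| <= (\prod_k (rnorm (c k))^-1 ^+ nu k)%:C.
Proof.
move=> p0 p1 s0 c1 nu0; rewrite /lam_term normr_prod rmorph_prod; apply: ler_prod => k _.
have ck0 : c k != 0.
  by rewrite -normr_eq0 gt_eqF // (lt_trans ltr01 (c1 k)).
have rk1 := @rnorm_gt1 _ (c k) (c1 k).
have r0 : 0 <= qbracket p (\sum_(j < m | (k <= j)%N) nu j)%:R `^ (- s k) by apply: powR_ge0.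
rewrite normr_ge0 /= normrM normrV; last by rewrite unitfE expf_neq0.
rewrite rmorphXn fmorphV /= rnormE exprVn (normrX (nu k) (c k)).
rewrite -[X in _ <= X]mulr1 [`|_%:C|]ger0_norm ?ler0c //.
apply: ler_wpM2l; first by rewrite invr_ge0 exprn_ge0.
suff h : qbracket p (\sum_(j < m | (k <= j)%N) nu j)%:R `^ (- s k) <= 1.
  by rewrite -lecR in h; exact: h.
rewrite powRN_le1 // qbr_ge1 //.
by rewrite (bigD1 k) //= ?leqnn // addn_gt0 nu0.
Qed.

Lemma ReB {R : realType} (x y : R[i]) : complex.Re (x - y) = complex.Re x - complex.Re y.
Proof. by case: x y => a b [c d]. Qed.
Lemma ImB {R : realType} (x y : R[i]) : complex.Im (x - y) = complex.Im x - complex.Im y.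
Proof. by case: x y => a b [c d]. Qed.
Lemma Re_le {R : realType} (z : R[i]) : `|complex.Re z|%:C <= `|z|.
Proof. exact: normc_ge_Re. Qed.
Lemma Im_le {R : realType} (z : R[i]) : `|complex.Im z|%:C <= `|z|.
Proof.
rewrite normc_def lecR -sqrtr_sqr ler_sqrt ?lerDr ?sqr_ge0 //.
by rewrite addr_ge0 ?sqr_ge0.
Qed.

Lemma addBK' {V : zmodType} (x y : V) : (x + y) - x = y.
Proof. by rewrite addrC addKr. Qed.

Definition gterm {R : realType} {m : nat} (rho : 'I_m -> R) (nu : 'I_m -> nat) : R :=
  \prod_k rho k ^+ nu k.
Definition gbox {R : realType} {m : nat} (rho : 'I_m -> R) (N : nat) : R :=
  \sum_(nu : {ffun 'I_m -> 'I_N}) gterm rho (fun k => (nu k).+1).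
Lemma box_widen (V : zmodType) (m N M : nat) (F : ('I_m -> nat) -> V) :
  (0 < m)%N -> (N <= M)%N ->
  \sum_(nu : {ffun 'I_m -> 'I_N}) F (fun k => (nu k).+1) =
  \sum_(nu : {ffun 'I_m -> 'I_M} | [forall k, (nu k < N)%N]) F (fun k => (nu k).+1).
Proof.
move=> m0; case: N => [|N] NM.
  rewrite big1; last by move=> nu; case: (nu (Ordinal m0)).
  by rewrite big1 // => nu /forallP /(_ (Ordinal m0)).
symmetry.
rewrite (reindex_onto (fun j : {ffun 'I_m -> 'I_N.+1} => [ffun k => widen_ord NM (j k)])
   (fun i : {ffun 'I_m -> 'I_M} => [ffun k => inord (i k)])) /=; last first.
  move=> i /forallP Hi; apply/ffunP => k; rewrite !ffunE; apply: val_inj.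
  by rewrite /= inordK.
apply: eq_big => j.
  apply/andP; split; first by apply/forallP=> k; rewrite ffunE /= ltn_ord.
  by apply/eqP/ffunP => k; rewrite !ffunE; apply: val_inj; rewrite /= inordK.
move=> _; congr F; apply: funext => k; by rewrite ffunE.
Qed.

Lemma box_diff {R : realType} (m : nat) (p : R) (s : 'I_m -> R) (c : 'I_m -> R[i]) (N M : nat) :
  (0 < m)%N -> (N <= M)%N -> 0 < p -> p < 1 -> (forall k, 0 <= s k) ->
  (forall k, 1 < `|c k|) ->
  `|lam_box p s c M - lam_box p s c N| <=
    (gbox (fun k => (rnorm (c k))^-1) M - gbox (fun k => (rnorm (c k))^-1) N)%:C.
Proof.
move=> m0 NM p0 p1 s0 c1.
rewrite /lam_box /gbox (@box_widen _ m N M (lam_term p s c) m0 NM).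
rewrite (@box_widen _ m N M (gterm (fun k => (rnorm (c k))^-1)) m0 NM).
rewrite [X in `|X - _|](bigID (fun nu : {ffun 'I_m -> 'I_M} => [forall k, (nu k < N)%N])) /= addBK'.
rewrite [X in (X - _)%:C](bigID (fun nu : {ffun 'I_m -> 'I_M} => [forall k, (nu k < N)%N])) /= addBK'.
apply: le_trans (ler_norm_sum _ _ _) _.
rewrite rmorph_sum; apply: ler_sum => nu _.
by apply: term_bound.
Qed.

Lemma geo_bound {R : realType} (rho : R) (N : nat) : 0 <= rho -> rho < 1 ->
  \sum_(i < N) rho ^+ i.+1 <= (1 - rho)^-1.
Proof.
move=> r0 r1.
have h : \sum_(i < N) rho ^+ i <= (1 - rho)^-1.
  rewrite -[X in _ <= X]mul1r ler_pdivlMr ?subr_gt0 // mulrC.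
  have -> : (1 - rho) * \sum_(i < N) rho ^+ i = 1 - rho ^+ N.
    by rewrite -opprB mulNr -subrX1 opprB.
  by rewrite lerBlDr lerDl exprn_ge0.
apply: le_trans h.
rewrite (eq_bigr (fun i : 'I_N => rho * rho ^+ i)); last by move=> i _; rewrite exprS.
rewrite -mulr_sumr -[X in _ <= X]mul1r; apply: ler_wpM2r; last exact: ltW.
by rewrite sumr_ge0 // => i _; rewrite exprn_ge0.
Qed.

Lemma gbox_le {R : realType} {m : nat} (rho : 'I_m -> R) (N : nat) :
  (forall k, 0 <= rho k) -> (forall k, rho k < 1) ->
  gbox rho N <= \prod_k (1 - rho k)^-1.
Proof.
move=> r0 r1; rewrite /gbox /gterm -(bigA_distr_bigA (fun k (i : 'I_N) => rho k ^+ i.+1)).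
apply: ler_prod => k _; rewrite geo_bound // andbT.
by rewrite sumr_ge0 // => i _; rewrite exprn_ge0.
Qed.

Lemma box_cvg {R : realType} (m : nat) (p : R) (s : 'I_m -> R) (c : 'I_m -> R[i])
   (phi : R[i] -> R) :
  (forall x y, phi (x - y) = phi x - phi y) -> (forall z, `|phi z|%:C <= `|z|) ->
  (0 < m)%N -> 0 < p -> p < 1 -> (forall k, 0 <= s k) ->
  (forall k, 1 < `|c k|) ->
  cvgn (fun N => phi (lam_box p s c N)).
Proof.
move=> phiB phin m0 p0 p1 s0 c1.
pose rho := fun k => (rnorm (c k))^-1.
pose u := fun N => phi (lam_box p s c N).
pose g := fun N => gbox rho N.
have key : forall N M, (N <= M)%N -> `|u M - u N| <= g M - g N.
  move=> N M NM; rewrite -lecR; apply: (le_trans _ (@box_diff _ m p s c N M m0 NM p0 p1 s0 c1)).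
  by rewrite /u -phiB phin.
have gmono : {homo g : N M / (N <= M)%N >-> N <= M}.
  by move=> N M NM; rewrite -subr_ge0; apply: le_trans (key N M NM).
have rho0 : forall k, 0 <= rho k.
  by move=> k; rewrite invr_ge0 ltW // (lt_trans ltr01) // rnorm_gt1.
have rho1 : forall k, rho k < 1.
  by move=> k; rewrite invf_lt1 ?rnorm_gt1 // (lt_trans ltr01) // rnorm_gt1.
set B := \prod_k (1 - rho k)^-1.
have gB : forall N, g N <= B by move=> N; apply: gbox_le.
have gcvg : cvgn g.
  apply: nondecreasing_is_cvgn => //; exists B => _ [N _ <-]; exact: gB.
have vcvg : cvgn (u + g).
  apply: nondecreasing_is_cvgn.
    move=> N M NM /=; rewrite -subr_ge0 opprD addrACA.
    have := key N M NM; rewrite ler_norml => /andP[h _].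
    by rewrite -lerBlDr sub0r.
  exists (u 0%N - g 0%N + 2 * B) => _ [N _ <-] /=.
  have := key 0%N N (leq0n N); rewrite ler_norml => /andP[_ h].
  have := gB N; rewrite /= => hN; rewrite lerBlDr in h.
  have -> : (u + g) N = u N + g N by []. lra.
have -> : (fun N => phi (lam_box p s c N)) = (u + g) - g.
  by apply/funext => N /=; rewrite addrK.
exact: is_cvgB.
Qed.

Lemma powR_sum {R : realType} {m : nat} (x : R) (s : 'I_m -> R) : 0 < x ->
  x `^ (\sum_k s k) = \prod_k x `^ s k.
Proof.
move=> x0; apply: (big_morph (powR x)).
  by move=> a b; rewrite powRD // (gt_eqF x0) implybT.
by rewrite powRr0.
Qed.

Lemma qbr_mul {R : realType} (q : R) (n T : nat) : 0 < q -> q < 1 -> (0 < n)%N ->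
  qbracket q (n * T)%:R = qbracket q n%:R * qbracket (q ^+ n) T%:R.
Proof.
move=> q0 q1 n0; rewrite !qbr_nat ?exprn_gt0 // exprM.
have h1 : 1 - q != 0 by rewrite subr_eq0 eq_sym lt_eqF.
have h2 : 1 - q ^+ n != 0 by rewrite subr_eq0 eq_sym lt_eqF // exprn_ilt1 // ?ltW // -lt0n.
by rewrite [RHS]mulrC mulrA divfK.
Qed.

Lemma qbr_ge0 {R : realType} (p : R) (T : nat) : 0 < p -> p < 1 -> 0 <= qbracket p T%:R.
Proof.
move=> p0 p1; rewrite qbr_nat //; apply: divr_ge0; rewrite subr_ge0; last exact: ltW.
by apply: exprn_ile1; apply: ltW.
Qed.

Lemma term_scale {R : realType} (m : nat) (q : R) (n : nat) (s : 'I_m -> R) (b : 'I_m -> R[i])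
  (nu : 'I_m -> nat) : 0 < q -> q < 1 -> (0 < n)%N ->
  lam_term q s b (fun k => n * nu k)%N * (qbracket q n%:R `^ (\sum_k s k))%:C
  = lam_term (q ^+ n) s (fun k => b k ^+ n) nu.
Proof.
move=> q0 q1 n0.
have qn0 : 0 < qbracket q n%:R by rewrite (lt_le_trans ltr01) // qbr_ge1.
rewrite powR_sum // rmorph_prod /lam_term -big_split /=; apply: eq_bigr => k _.
rewrite -exprM -mulrA -rmorphM /=; congr (_ * (_%:C)).
rewrite -big_distrr /= qbr_mul // powRM ?qbr_ge0 ?exprn_gt0 ?exprn_ilt1 ?ltW //.
rewrite mulrAC powRN mulVf ?mul1r ?powR_eq0 ?negb_and ?(gt_eqF qn0) //.
by apply/eqP => h; rewrite h in n0.
Qed.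



Lemma hlt (n N i : nat) : (0 < n)%N -> (i < N)%N -> ((n * i.+1).-1 < n * N)%N.
Proof. move=> n0 iN. nia. Qed.
Lemma h'lt (n N j : nat) : (0 < n)%N -> (j < n * N)%N -> ((j.+1 %/ n).-1 < N)%N.
Proof.
move=> n0 jN.
have h1 : (j.+1 %/ n <= N)%N.
  by rewrite -[X in (_ <= X)%N](mulKn N n0); apply: leq_div2r.
have h2 : (0 < N)%N by case: N jN h1 => //; rewrite muln0.
by case: (j.+1 %/ n)%N h1 => //= x; lia.
Qed.



Lemma box_ident {R : realType} (m : nat) (q : R) (n N : nat) (s : 'I_m -> R)
  (b : 'I_m -> R[i]) (rs : seq R[i]) :
  (0 < n)%N -> uniq rs -> (forall z : R[i], (z \in rs) = (z ^+ n == 1)) ->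
  \sum_(e : {ffun 'I_m -> 'I_(size rs)}) lam_box q s (fun k => nth 0 rs (e k) * b k) (n * N)
  = (n ^ m)%:R * \sum_(mu : {ffun 'I_m -> 'I_N}) lam_term q s b (fun k => n * (mu k).+1)%N.
Proof.
move=> n0 urs Hrs; have [sz S] := @roots_sum R n rs n0 urs Hrs.
rewrite /lam_box exchange_big /=.
have step : forall nu : {ffun 'I_m -> 'I_(n * N)},
  \sum_(e : {ffun 'I_m -> 'I_(size rs)})
     lam_term q s (fun k => nth 0 rs (e k) * b k) (fun k => (nu k).+1)
  = (\prod_k (if (n %| (nu k).+1)%N then n%:R else 0)) * lam_term q s b (fun k => (nu k).+1).
  move=> nu.
  pose Y := fun k : 'I_m => b k ^- (nu k).+1 *
     (qbracket q (\sum_(j < m | (k <= j)%N) (nu j).+1)%:R `^ (- s k))%:C.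
  transitivity (\sum_(e : {ffun 'I_m -> 'I_(size rs)})
                   \prod_k (nth 0 rs (e k) ^- (nu k).+1 * Y k)).
    by apply: eq_bigr => e _; apply: eq_bigr => k _; rewrite /Y exprMn invfM mulrA.
  rewrite -(bigA_distr_bigA (fun k (i : 'I_(size rs)) => nth 0 rs i ^- (nu k).+1 * Y k)).
  rewrite /lam_term -big_split /=; apply: eq_bigr => k _; rewrite -mulr_suml S.
  by [].
under eq_bigr do rewrite step.
rewrite (bigID (fun nu : {ffun 'I_m -> 'I_(n * N)} => [forall k, (n %| (nu k).+1)%N])) /=.
rewrite [X in _ + X]big1 ?addr0; last first.
  by move=> nu /forallPn [k hk]; rewrite (bigD1 k) //= (negbTE hk) !mul0r.
rewrite (eq_bigr (fun nu : {ffun 'I_m -> 'I_(n * N)} => (n ^ m)%:R * lam_term q s b (fun k => (nu k).+1))); last first.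
  move=> nu /forallP hnu; rewrite (eq_bigr (fun _ => n%:R)) ?prodr_const ?card_ord ?natrX //.
  by move=> k _; rewrite hnu.
rewrite -mulr_sumr; congr (_ * _).
pose h := fun mu : {ffun 'I_m -> 'I_N} =>
  [ffun k => Ordinal (@hlt n N (mu k) n0 (ltn_ord (mu k)))].
pose h' := fun nu : {ffun 'I_m -> 'I_(n * N)} =>
  [ffun k => Ordinal (@h'lt n N (nu k) n0 (ltn_ord (nu k)))].
rewrite (reindex_onto h h'); last first.
  move=> nu /forallP hnu; apply/ffunP => k; rewrite !ffunE; apply: val_inj => /=.
  have := hnu k; case/dvdnP => x hx; rewrite hx mulnK //.
  have x0 : (0 < x)%N by case: x hx.
  by rewrite prednK // mulnC -hx.
apply: eq_big => mu.
  apply/andP; split.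
    by apply/forallP => k; rewrite ffunE /= prednK ?muln_gt0 ?n0 // dvdn_mulr.
  apply/eqP/ffunP => k; rewrite !ffunE; apply: val_inj => /=.
  by rewrite prednK ?muln_gt0 ?n0 // mulKn.
move=> _; congr lam_term; apply: funext => k; by rewrite ffunE /= prednK ?muln_gt0 ?n0.
Qed.

Lemma cvg_bigsum {R : realType} (I : Type) (r : seq I) (f : I -> nat -> R) (l : I -> R) :
  (forall i, (f i x @[x --> \oo] --> l i)%classic) ->
  ((\sum_(i <- r) f i x) @[x --> \oo] --> \sum_(i <- r) l i)%classic.
Proof.
move=> H; elim: r => [|a r IH].
  under eq_fun do rewrite big_nil; rewrite big_nil; exact: cvg_cst.
under eq_fun do rewrite big_cons; rewrite big_cons; exact: cvgD.
Qed.

Lemma ReM {R : realType} (a : R) (z : R[i]) : complex.Re (a%:C * z) = a * complex.Re z.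
Proof. by case: z => x y /=; rewrite mul0r subr0. Qed.
Lemma ImM {R : realType} (a : R) (z : R[i]) : complex.Im (a%:C * z) = a * complex.Im z.
Proof. by case: z => x y /=; rewrite mul0r addr0. Qed.

Theorem theorem6p1 (R : realType) (q : R) (m n : nat)
    (s : 'I_m -> R) (b : 'I_m -> R[i]) (rs : seq R[i]) :
  0 < q -> q < 1 -> (0 < m)%N -> (0 < n)%N ->
  (forall k, 0 < s k) -> (forall k, 1 < `|b k|) ->
  uniq rs -> (forall z : R[i], (z \in rs) = (z ^+ n == 1)) ->
  (n ^ m)%:R * mpolylog (q ^+ n) s (fun k => b k ^+ n)
  = ((qbracket q n%:R) `^ (\sum_(k < m) s k))%:C *
    \sum_(e : {ffun 'I_m -> 'I_(size rs)})
       mpolylog q s (fun k => nth 0 rs (e k) * b k).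
Proof.
move=> q0 q1 m0 n0 s0 b1 urs Hrs.
have s0' : forall k, 0 <= s k by move=> k; apply: ltW.
set K := qbracket q n%:R `^ (\sum_(k < m) s k).
pose c := fun (e : {ffun 'I_m -> 'I_(size rs)}) k => nth 0 rs (e k) * b k.
have c1 : forall e k, 1 < `|c e k|.
  move=> e k; rewrite /c normrM.
  have : nth 0 rs (e k) \in rs by rewrite mem_nth.
  rewrite Hrs => /eqP /(congr1 Num.norm); rewrite normrX normr1 => /eqP.
  by rewrite pexpr_eq1 // => /eqP ->; rewrite mul1r.
have mainbox : forall N, (n ^ m)%:R * lam_box (q ^+ n) s (fun k => b k ^+ n) N
    = K%:C * \sum_e lam_box q s (c e) (n * N).
  move=> N; rewrite /c box_ident // [RHS]mulrC -mulrA mulr_suml /lam_box; congr (_ * _).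
  by apply: eq_bigr => mu _; rewrite term_scale.
have a0 : ((n ^ m)%:R : R) != 0 by rewrite pnatr_eq0 expn_eq0 negb_and -lt0n n0.
have natC : ((n ^ m)%:R : R[i]) = ((n ^ m)%:R : R)%:C by rewrite rmorph_nat.
have gen : forall phi : R[i] -> R,
   (forall x y, phi (x - y) = phi x - phi y) -> (forall z, `|phi z|%:C <= `|z|) ->
   (forall a z, phi (a%:C * z) = a * phi z) ->
   (forall (r : seq {ffun 'I_m -> 'I_(size rs)}) F, phi (\sum_(i <- r) F i) = \sum_(i <- r) phi (F i)) ->
   limn (fun N => phi (lam_box (q ^+ n) s (fun k => b k ^+ n) N))
   = K / (n ^ m)%:R * \sum_e limn (fun N => phi (lam_box q s (c e) N)).
  move=> phi phiB phin phiM phiS.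
  have UR : (fun N => phi (lam_box (q ^+ n) s (fun k => b k ^+ n) N))
     = (fun N => K / (n ^ m)%:R * \sum_e phi (lam_box q s (c e) (n * N))).
    apply: funext => N; have := congr1 phi (mainbox N); rewrite natC !phiM phiS => h.
    by rewrite [RHS]mulrAC -h [RHS]mulrC mulKf.
  rewrite UR; apply: cvg_lim => //; apply: cvgMr; apply: cvg_bigsum => e.
  have cv := @box_cvg R m q s (c e) phi phiB phin m0 q0 q1 s0' (c1 e).
  exact: (cvg_comp _ _ (@cvg_mulnl n n0) cv).
rewrite /mpolylog.
rewrite (gen _ ReB Re_le ReM); last by move=> r F; rewrite raddf_sum.
rewrite (gen _ ImB Im_le ImM); last by move=> r F; rewrite raddf_sum.
apply/eqP; rewrite eq_complex; apply/andP; split; apply/eqP; rewrite natC.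
  rewrite ReM ReM raddf_sum /= mulrA mulrCA mulfV // mulr1; congr (_ * _).
rewrite ImM ImM raddf_sum /= mulrA mulrCA mulfV // mulr1; congr (_ * _).
Qed.
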